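(* (1) For every finitely complete category $\mathbb E$, any internal unitary magma in $\mathbb E$ that carries an internal opimplicative subtraction structure in the category of internal unitary magmas is isomorphic to the terminal object; the same holds for internal implicative opsubtractions. (2) If $X$ is a topological space with a continuous binary operation $s$ and a point $0$ satisfying the opimplicative subtraction identities (resp. the implicative opsubtraction identities), then $\pi_1(X,0)$ is trivial. (3) If $X$ is a topological space with a continuous ternary operation $p$ satisfying $p(x,y,y)=x=p(y,y,x)$ and the Pixley identity $p(x,y,x)=x$, then $\pi_1(X,x_0)$ is trivial for every point $x_0\in X$.
   Context: An opimplicative subtraction is a set with a binary operation $s$ and a constant $0$ such that $s(x,x)=0$, $s(x,0)=x$ and $s(0,x)=0$. An implicative opsubtraction is a set with a binary operation $s$ and constant $0$ such that $s(x,x)=0$, $s(0,x)=x$ and $s(x,0)=0$. A unitary magma is a set with binary operation $*$ and constant $1$ with $x*1=x=1*x$. Internal structures in a finitely complete category are defined diagrammatically via finite products. *)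

(* Defs.v *)
From Stdlib Require Import ProofIrrelevance.
From HB Require Import structures.
From mathcomp Require Import all_boot all_order all_algebra.
From mathcomp Require Import all_classical all_reals topology.
From mathcomp Require Import Rstruct Rstruct_topology.

Set Implicit Arguments.
Unset Strict Implicit.
Unset Printing Implicit Defensive.

Record Category := {
  ob :> Type;
  hom : ob -> ob -> Type;
  cat_id : forall A, hom A A;
  comp : forall A B D, hom B D -> hom A B -> hom A D;
  comp_id_l : forall A B (f : hom A B), comp (cat_id B) f = f;
  comp_id_r : forall A B (f : hom A B), comp f (cat_id A) = f;
  comp_assoc : forall A B C D (f : hom A B) (g : hom B C) (h : hom C D),
      comp h (comp g f) = comp (comp h g) f
}.

Arguments cat_id {c} A.
Arguments comp {c A B D}.
Notation "g ⊙ f" := (comp g f) (at level 40, left associativity).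

Definition cat_isomorphic (C : Category) (A B : C) : Prop :=
  exists (f : hom A B) (g : hom B A), g ⊙ f = cat_id A /\ f ⊙ g = cat_id B.

Definition is_terminal (C : Category) (T : C) : Prop :=
  forall X : C, exists t : hom X T, forall t' : hom X T, t' = t.

Definition is_product (C : Category) (A B P : C) (p1 : hom P A) (p2 : hom P B)
  : Prop :=
  forall (X : C) (f : hom X A) (g : hom X B),
    exists h : hom X P, (p1 ⊙ h = f /\ p2 ⊙ h = g) /\
      forall h' : hom X P, p1 ⊙ h' = f -> p2 ⊙ h' = g -> h' = h.

Record FinComplete (C : Category) := {
  fc_one : C;
  fc_bang : forall X : C, hom X fc_one;
  fc_bang_uniq : forall (X : C) (f : hom X fc_one), f = fc_bang X;
  fc_prod : C -> C -> C;
  fc_pr1 : forall A B : C, hom (fc_prod A B) A;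
  fc_pr2 : forall A B : C, hom (fc_prod A B) B;
  fc_pair : forall (X A B : C), hom X A -> hom X B -> hom X (fc_prod A B);
  fc_pr1_pair : forall X A B (f : hom X A) (g : hom X B), fc_pr1 A B ⊙ fc_pair f g = f;
  fc_pr2_pair : forall X A B (f : hom X A) (g : hom X B), fc_pr2 A B ⊙ fc_pair f g = g;
  fc_pair_uniq : forall X A B (h : hom X (fc_prod A B)),
      h = fc_pair (fc_pr1 A B ⊙ h) (fc_pr2 A B ⊙ h);
  fc_eqz : forall (A B : C), hom A B -> hom A B -> C;
  fc_eqz_m : forall A B (f g : hom A B), hom (fc_eqz f g) A;
  fc_eqz_eq : forall A B (f g : hom A B), f ⊙ fc_eqz_m f g = g ⊙ fc_eqz_m f g;
  fc_eqz_lift : forall A B (f g : hom A B) X (h : hom X A),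
      f ⊙ h = g ⊙ h -> hom X (fc_eqz f g);
  fc_eqz_lift_eq : forall A B (f g : hom A B) X (h : hom X A) (e : f ⊙ h = g ⊙ h),
      fc_eqz_m f g ⊙ fc_eqz_lift e = h;
  fc_eqz_uniq : forall A B (f g : hom A B) X (k k' : hom X (fc_eqz f g)),
      fc_eqz_m f g ⊙ k = fc_eqz_m f g ⊙ k' -> k = k'
}.








Arguments fc_one {C} f0.
Arguments fc_bang {C} f0 X.
Arguments fc_prod {C} f0.
Arguments fc_pr1 {C} f0 {A B}.
Arguments fc_pr2 {C} f0 {A B}.
Arguments fc_pair {C} f0 {X A B}.
Section IUMag.
Variables (E : Category) (F : FinComplete E).

Definition prodmap (A A' B B' : E) (f : hom A B) (g : hom A' B')
  : hom (fc_prod F A A') (fc_prod F B B') :=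
  fc_pair F (f ⊙ fc_pr1 F) (g ⊙ fc_pr2 F).

Record IUMagma := {
  umc :> E;
  umul : hom (fc_prod F umc umc) umc;
  uunit : hom (fc_one F) umc;
  umul_unit_r : umul ⊙ fc_pair F (cat_id umc) (uunit ⊙ fc_bang F umc) = cat_id umc;
  umul_unit_l : umul ⊙ fc_pair F (uunit ⊙ fc_bang F umc) (cat_id umc) = cat_id umc
}.

Record IUMagHom (M N : IUMagma) := {
  umh :> hom M N;
  umh_mul : umh ⊙ umul M = umul N ⊙ prodmap umh umh;
  umh_unit : umh ⊙ uunit M = uunit N
}.

Lemma IIUMagHom_eq (M N : IUMagma) (f g : IUMagHom M N) : umh f = umh g -> f = g.
Proof.
case: f g => f fm fu [g gm gu] /= E0; subst g.
by rewrite (proof_irrelevance _ fm gm) (proof_irrelevance _ fu gu).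
Qed.

Lemma pair_comp (X Y A B : E) (f : hom Y A) (g : hom Y B) (h : hom X Y) :
  fc_pair F f g ⊙ h = fc_pair F (f ⊙ h) (g ⊙ h).
Proof.
rewrite [LHS]fc_pair_uniq !comp_assoc fc_pr1_pair fc_pr2_pair //.
Qed.

Lemma prodmap_comp (A B C : E) (f : hom A B) (g : hom B C) :
  prodmap g g ⊙ prodmap f f = prodmap (g ⊙ f) (g ⊙ f).
Proof.
rewrite /prodmap pair_comp -!comp_assoc fc_pr1_pair fc_pr2_pair.
by rewrite !comp_assoc.
Qed.

Lemma prodmap_id (A : E) : prodmap (cat_id A) (cat_id A) = cat_id (fc_prod F A A).
Proof.
rewrite /prodmap !comp_id_l (fc_pair_uniq (cat_id (fc_prod F A A))) !comp_id_r //.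
Qed.

Definition umag_id (M : IUMagma) : IUMagHom M M.
Proof.
refine (@Build_IUMagHom M M (cat_id M) _ _).
- by rewrite prodmap_id comp_id_l comp_id_r.
- by rewrite comp_id_l.
Defined.

Definition umag_comp (M N P : IUMagma) (g : IUMagHom N P) (f : IUMagHom M N)
  : IUMagHom M P.
Proof.
refine (@Build_IUMagHom M P (umh g ⊙ umh f) _ _).
- rewrite -comp_assoc umh_mul comp_assoc umh_mul -comp_assoc prodmap_comp //.
- by rewrite -comp_assoc umh_unit umh_unit.
Defined.

Definition IUMag : Category.
Proof.
refine (@Build_Category IUMagma IUMagHom umag_id umag_comp _ _ _).
- by move=> A B f; apply: IIUMagHom_eq; rewrite /= comp_id_l.
- by move=> A B f; apply: IIUMagHom_eq; rewrite /= comp_id_r.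
- by move=> A B C D f g h; apply: IIUMagHom_eq; rewrite /= comp_assoc.
Defined.

End IUMag.

(* The induced maps are characterised by their universal properties,   *)
(* so the definition does not depend on the choice of products.        *)

Definition subtraction_laws (C : Category) (A T P : C) (p1 : hom P A)
  (p2 : hom P A) (s : hom P A) (z : hom T A) (opimp : bool) : Prop :=
  forall (t : hom A T),
    (forall d : hom A P, p1 ⊙ d = cat_id A -> p2 ⊙ d = cat_id A -> s ⊙ d = z ⊙ t) /\
    (forall l : hom A P, p1 ⊙ l = cat_id A -> p2 ⊙ l = z ⊙ t ->
        s ⊙ l = (if opimp then cat_id A else z ⊙ t)) /\
    (forall r : hom A P, p1 ⊙ r = z ⊙ t -> p2 ⊙ r = cat_id A ->
        s ⊙ r = (if opimp then z ⊙ t else cat_id A)).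

Definition has_internal_opimplicative_subtraction (C : Category) (A : C) : Prop :=
  exists (T : C) (P : C) (p1 p2 : hom P A) (s : hom P A) (z : hom T A),
    is_terminal T /\ is_product p1 p2 /\ subtraction_laws p1 p2 s z true.

Definition has_internal_implicative_opsubtraction (C : Category) (A : C) : Prop :=
  exists (T : C) (P : C) (p1 p2 : hom P A) (s : hom P A) (z : hom T A),
    is_terminal T /\ is_product p1 p2 /\ subtraction_laws p1 p2 s z false.

Local Open Scope classical_set_scope.
Local Open Scope ring_scope.

Definition unit_interval : set Rdefinitions.R := `[0%R, 1%R]%classic.

Definition is_loop (X : topologicalType) (x0 : X) (g : Rdefinitions.R -> X) : Prop :=
  {within unit_interval, continuous g} /\ g 0%R = x0 /\ g 1%R = x0.

Definition null_homotopic_loop (X : topologicalType) (x0 : X) (g : Rdefinitions.R -> X)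
  : Prop :=
  exists H : Rdefinitions.R * Rdefinitions.R -> X,
    {within unit_interval `*` unit_interval, continuous H} /\
    (forall t, unit_interval t -> H (t, 0%R) = g t) /\
    (forall t, unit_interval t -> H (t, 1%R) = x0) /\
    (forall u, unit_interval u -> H (0%R, u) = x0 /\ H (1%R, u) = x0).

Definition pi1_trivial (X : topologicalType) (x0 : X) : Prop :=
  forall g : Rdefinitions.R -> X, is_loop x0 g -> null_homotopic_loop x0 g.

(* Main.v *)
Require Import Defs.
From HB Require Import structures.
From mathcomp Require Import all_boot all_order all_algebra.
From mathcomp Require Import all_classical all_reals topology.
From mathcomp Require Import Rstruct Rstruct_topology.
From mathcomp Require Import normedtype.
Import Order.TTheory GRing.Theory Num.Theory.
Local Notation hom := Defs.hom.
Section CatPart.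
Variables (E : Category) (F : FinComplete E).
Lemma idl (A B : E) (f : hom A B) : cat_id B ⊙ f = f. Proof. exact: comp_id_l. Qed.
Lemma idr (A B : E) (f : hom A B) : f ⊙ cat_id A = f. Proof. exact: comp_id_r. Qed.
Lemma assoc (A B C D : E) (f : hom A B) (g : hom B C) (h : hom C D) :
      h ⊙ (g ⊙ f) = (h ⊙ g) ⊙ f. Proof. exact: comp_assoc. Qed.

Lemma pair_ext (X A B : E) (h k : hom X (fc_prod F A B)) :
  fc_pr1 F ⊙ h = fc_pr1 F ⊙ k -> fc_pr2 F ⊙ h = fc_pr2 F ⊙ k -> h = k.
Proof. by move=> e1 e2; rewrite (fc_pair_uniq h) (fc_pair_uniq k) e1 e2. Qed.

Lemma bang_comp (X Y : E) (a : hom X Y) : fc_bang F Y ⊙ a = fc_bang F X.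
Proof. exact: fc_bang_uniq. Qed.

Variable M : IUMagma F.
Notation m := (umul M).
Notation e := (uunit M).

Lemma gen_unit_r (X : E) (a : hom X M) : m ⊙ fc_pair F a (e ⊙ fc_bang F X) = a.
Proof.
have := f_equal (fun k => k ⊙ a) (umul_unit_r M).
by rewrite /= -assoc pair_comp idl -assoc bang_comp.
Qed.

Lemma gen_unit_l (X : E) (a : hom X M) : m ⊙ fc_pair F (e ⊙ fc_bang F X) a = a.
Proof.
have := f_equal (fun k => k ⊙ a) (umul_unit_l M).
by rewrite /= -assoc pair_comp idl -assoc bang_comp.
Qed.

Definition Qo : E := fc_prod F M M.
Definition mQ : hom (fc_prod F Qo Qo) Qo :=
  fc_pair F (m ⊙ prodmap F (fc_pr1 F) (fc_pr1 F)) (m ⊙ prodmap F (fc_pr2 F) (fc_pr2 F)).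
Definition eQ : hom (fc_one F) Qo := fc_pair F e e.

Lemma Q_unit_r : mQ ⊙ fc_pair F (cat_id Qo) (eQ ⊙ fc_bang F Qo) = cat_id Qo.
Proof.
apply: pair_ext; rewrite assoc ?fc_pr1_pair ?fc_pr2_pair -assoc /prodmap pair_comp
  -!assoc ?fc_pr1_pair ?fc_pr2_pair !idr assoc /eQ ?fc_pr1_pair ?fc_pr2_pair;
  exact: gen_unit_r.
Qed.

Lemma Q_unit_l : mQ ⊙ fc_pair F (eQ ⊙ fc_bang F Qo) (cat_id Qo) = cat_id Qo.
Proof.
apply: pair_ext; rewrite assoc ?fc_pr1_pair ?fc_pr2_pair -assoc /prodmap pair_comp
  -!assoc ?fc_pr1_pair ?fc_pr2_pair !idr assoc /eQ ?fc_pr1_pair ?fc_pr2_pair;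
  exact: gen_unit_l.
Qed.

Definition Q : IUMagma F := Build_IUMagma Q_unit_r Q_unit_l.


Definition pi1H : IUMagHom Q M.
Proof.
refine (@Build_IUMagHom _ _ Q M (fc_pr1 F) _ _); rewrite /= /mQ /eQ.
- by rewrite fc_pr1_pair.
- by rewrite fc_pr1_pair.
Defined.

Definition pi2H : IUMagHom Q M.
Proof.
refine (@Build_IUMagHom _ _ Q M (fc_pr2 F) _ _); rewrite /= /mQ /eQ.
- by rewrite fc_pr2_pair.
- by rewrite fc_pr2_pair.
Defined.

Lemma prodmap_pair (X A A' B B' : E) (f : hom A B) (g : hom A' B') (a : hom X A) (b : hom X A') :
  prodmap F f g ⊙ fc_pair F a b = fc_pair F (f ⊙ a) (g ⊙ b).
Proof. by rewrite /prodmap pair_comp -!assoc fc_pr1_pair fc_pr2_pair. Qed.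

Definition pairH (N : IUMagma F) (f g : IUMagHom N M) : IUMagHom N Q.
Proof.
refine (@Build_IUMagHom _ _ N Q (fc_pair F (umh f) (umh g)) _ _); rewrite /=.
- apply: pair_ext; rewrite !assoc ?fc_pr1_pair ?fc_pr2_pair umh_mul /mQ
    ?fc_pr1_pair ?fc_pr2_pair -assoc prodmap_comp ?fc_pr1_pair ?fc_pr2_pair //.
- by rewrite pair_comp /eQ !umh_unit.
Defined.

Lemma mQ_pair (X : E) (a a' b b' : hom X M) :
  fc_pair F (m ⊙ fc_pair F a a') (m ⊙ fc_pair F b b') =
  mQ ⊙ fc_pair F (fc_pair F a b) (fc_pair F a' b').
Proof.
apply: pair_ext; rewrite assoc /mQ ?fc_pr1_pair ?fc_pr2_pair -assoc prodmap_pair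
  ?fc_pr1_pair ?fc_pr2_pair //.
Qed.


Lemma one_eq (X : E) (f g : hom X (fc_one F)) : f = g.
Proof. by rewrite (fc_bang_uniq f) (fc_bang_uniq g). Qed.

Lemma U_unit_r : fc_bang F (fc_prod F (fc_one F) (fc_one F)) ⊙
   fc_pair F (cat_id (fc_one F)) (cat_id (fc_one F) ⊙ fc_bang F (fc_one F)) = cat_id (fc_one F).
Proof. exact: one_eq. Qed.
Lemma U_unit_l : fc_bang F (fc_prod F (fc_one F) (fc_one F)) ⊙
   fc_pair F (cat_id (fc_one F) ⊙ fc_bang F (fc_one F)) (cat_id (fc_one F)) = cat_id (fc_one F).
Proof. exact: one_eq. Qed.
Definition U : IUMagma F := Build_IUMagma U_unit_r U_unit_l.

Definition toU (N : IUMagma F) : IUMagHom N U.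
Proof.
refine (@Build_IUMagHom _ _ N U (fc_bang F N) _ _); exact: one_eq.
Defined.

Lemma key (b : bool) (T P : IUMag F) (p1 p2 s : Defs.hom (c:=IUMag F) P M)
  (z : Defs.hom (c:=IUMag F) T M) :
  is_terminal T -> is_product p1 p2 -> subtraction_laws p1 p2 s z b ->
  e ⊙ fc_bang F M = cat_id M.
Proof.
move=> Tt Pp laws.
have [t _] := Tt M.
have [u _] := Tt U.
have [w wu] := Tt T.
have uv : umh u ⊙ umh (toU T) = cat_id (umc T).
  have e1 := wu (umag_comp u (toU T)).
  have e2 := wu (umag_id T).
  by have := f_equal (@umh _ _ _ _) (etrans e1 (esym e2)).
have zu : umh z ⊙ umh u = e.
  have := umh_unit (umag_comp z u); rewrite /= idr => ->; done.
set eps := e ⊙ fc_bang F M.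
have ceps : umh z ⊙ umh t = eps.
  rewrite -[umh z]idr -uv assoc zu -assoc /eps; congr (_ ⊙ _); exact: one_eq.
have [h [[h1 h2] _]] := Pp Q pi1H pi2H.
have h1' : umh p1 ⊙ umh h = fc_pr1 F by have := f_equal (@umh _ _ _ _) h1.
have h2' : umh p2 ⊙ umh h = fc_pr2 F by have := f_equal (@umh _ _ _ _) h2.
have [Hd [Hl Hr]] := laws t.
set s' := umh s ⊙ umh h.
have smul : forall (a a' b' b'' : hom M M),
  s' ⊙ fc_pair F (m ⊙ fc_pair F a a') (m ⊙ fc_pair F b' b'') =
  m ⊙ fc_pair F (s' ⊙ fc_pair F a b') (s' ⊙ fc_pair F a' b'').
  move=> a a' b' b''.
  rewrite mQ_pair assoc.
  have := umh_mul (umag_comp s h); rewrite /= => ->.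
  by rewrite -assoc prodmap_pair.
pose zt : Defs.hom (c:=IUMag F) M M := umag_comp z t.
have sd : s' ⊙ fc_pair F (cat_id M) (cat_id M) = eps.
  have := f_equal (@umh _ _ _ _) (Hd (umag_comp h (pairH _ (umag_id M) (umag_id M))) _ _).
  rewrite /= -ceps -assoc; apply.
  - by apply: IIUMagHom_eq; rewrite /= assoc h1' fc_pr1_pair.
  - by apply: IIUMagHom_eq; rewrite /= assoc h2' fc_pr2_pair.
have sl : s' ⊙ fc_pair F (cat_id M) eps = (if b then cat_id M else eps).
  have := f_equal (@umh _ _ _ _) (Hl (umag_comp h (pairH _ (umag_id M) zt)) _ _).
  case: b {Hd Hl Hr laws} => /=; rewrite ?ceps -assoc; apply.
  - by apply: IIUMagHom_eq; rewrite /= assoc h1' fc_pr1_pair.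
  - by apply: IIUMagHom_eq; rewrite /= assoc h2' fc_pr2_pair.
  - by apply: IIUMagHom_eq; rewrite /= assoc h1' fc_pr1_pair.
  - by apply: IIUMagHom_eq; rewrite /= assoc h2' fc_pr2_pair.
have sr : s' ⊙ fc_pair F eps (cat_id M) = (if b then eps else cat_id M).
  have := f_equal (@umh _ _ _ _) (Hr (umag_comp h (pairH _ zt (umag_id M))) _ _).
  case: b {Hd Hl Hr sl laws} => /=; rewrite ?ceps -assoc; apply.
  - by apply: IIUMagHom_eq; rewrite /= assoc h1' fc_pr1_pair.
  - by apply: IIUMagHom_eq; rewrite /= assoc h2' fc_pr2_pair.
  - by apply: IIUMagHom_eq; rewrite /= assoc h1' fc_pr1_pair.
  - by apply: IIUMagHom_eq; rewrite /= assoc h2' fc_pr2_pair.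
have E1 : s' ⊙ fc_pair F (cat_id M) (cat_id M) =
   s' ⊙ fc_pair F (m ⊙ fc_pair F (cat_id M) eps) (m ⊙ fc_pair F eps (cat_id M)).
  by rewrite /eps gen_unit_r gen_unit_l.
rewrite -/eps -sd E1 smul sl sr; case: (b) => /=.
- exact: gen_unit_r.
- exact: gen_unit_l.
Qed.

End CatPart.



Section Topo.
Local Open Scope classical_set_scope.
Local Open Scope ring_scope.
Lemma within_map (T U : topologicalType) (f : T -> U) (S : set T) (I : set U) (q : T) :
  {for q, continuous f} -> (forall p, S p -> I (f p)) ->
  f @ within S (nbhs q) --> within I (nbhs (f q)).
Proof.
move=> fc SI A /= IA.
have H : nbhs q (fun p => I (f p) -> A (f p)) := fc _ IA.
change (nbhs q (fun p => S p -> A (f p))).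
apply: filterS H => p IAp Sp; exact: IAp (SI _ Sp).
Qed.

Lemma fst_cont (T U : topologicalType) (q : T * U) : {for q, continuous (@fst T U)}.
Proof. exact: cvg_fst. Qed.

Lemma mul_cont (q : Rdefinitions.R * Rdefinitions.R) :
  {for q, continuous (fun p : Rdefinitions.R * Rdefinitions.R => p.2 * p.1)}.
Proof.
apply: (@cvgM _ _ _ _ (fun p : Rdefinitions.R * Rdefinitions.R => p.2) fst).
  exact: cvg_snd.
exact: cvg_fst.
Qed.

Lemma ui_mul (t u : Rdefinitions.R) : unit_interval t -> unit_interval u -> unit_interval (u * t).
Proof.
rewrite /unit_interval /= !in_itv /= => /andP[t0 t1] /andP[u0 u1].
by rewrite mulr_ge0 //= mulr_ile1.
Qed.

Lemma pi1_gen (X : topologicalType) (phi : X -> X -> X) (x0 : X) :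
  continuous (fun q : X * X => phi q.1 q.2) ->
  (forall x, phi x x0 = x) -> (forall x, phi x x = x0) -> (forall y, phi x0 y = x0) ->
  pi1_trivial x0.
Proof.
move=> phic h1 h2 h3 g [gc [g0 g1]].
have gw := (proj1 (subspace_continuousP _ _) gc).
exists (fun q => phi (g q.1) (g (q.2 * q.1))); split; last first.
  split; first by move=> t _ /=; rewrite mul0r g0 h1.
  split; first by move=> t _ /=; rewrite mul1r h2.
  by move=> u _ /=; rewrite mulr0 g0 g1 h3.
apply/subspace_continuousP => q [/= Iq1 Iq2].
have c1 : (fun p : Rdefinitions.R * Rdefinitions.R => g p.1) @
   within (unit_interval `*` unit_interval) (nbhs q) --> g q.1.
  apply: cvg_trans; last exact: (gw _ Iq1).
  apply: (cvg_app g (@within_map _ _ fst (unit_interval `*` unit_interval) unit_interval q (@fst_cont _ _ q) _)).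
  by move=> p [].
have c2 : (fun p : Rdefinitions.R * Rdefinitions.R => g (p.2 * p.1)) @
   within (unit_interval `*` unit_interval) (nbhs q) --> g (q.2 * q.1).
  apply: cvg_trans; last exact: (gw _ (ui_mul _ _ Iq1 Iq2)).
  apply: (cvg_app g (@within_map _ _ (fun p : Rdefinitions.R * Rdefinitions.R => p.2 * p.1) (unit_interval `*` unit_interval) unit_interval q (mul_cont q) _)).
  by move=> p [] /= ? ?; apply: ui_mul.
have := continuous_cvg _ (phic (g q.1, g (q.2 * q.1))) (cvg_pair c1 c2).
exact.
Qed.
End Topo.

Theorem mainTheorem16 :
  (* (1) internal unitary magmas carrying an internal opimplicative
         subtraction / implicative opsubtraction in UMag(E) are terminal *)
  (forall (E : Category) (F : FinComplete E) (M : IUMagma F),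
      @has_internal_opimplicative_subtraction (IUMag F) M ->
      cat_isomorphic (umc M) (fc_one F)) /\
  (forall (E : Category) (F : FinComplete E) (M : IUMagma F),
      @has_internal_implicative_opsubtraction (IUMag F) M ->
      cat_isomorphic (umc M) (fc_one F)) /\
  (* (2) topological opimplicative subtractions / implicative opsubtractions *)
  (forall (X : topologicalType) (s : X -> X -> X) (z : X),
      continuous (fun q : X * X => s q.1 q.2) ->
      (forall x, s x x = z) -> (forall x, s x z = x) -> (forall x, s z x = z) ->
      pi1_trivial z) /\
  (forall (X : topologicalType) (s : X -> X -> X) (z : X),
      continuous (fun q : X * X => s q.1 q.2) ->
      (forall x, s x x = z) -> (forall x, s z x = x) -> (forall x, s x z = z) ->
      pi1_trivial z) /\
  (* (3) Pixley terms *)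
  (forall (X : topologicalType) (p : X -> X -> X -> X),
      continuous (fun q : X * X * X => p q.1.1 q.1.2 q.2) ->
      (forall x y, p x y y = x) -> (forall x y, p y y x = x) ->
      (forall x y, p x y x = x) ->
      forall x0 : X, pi1_trivial x0).
Proof.
split.
  move=> E F M [T [P [p1 [p2 [s [z [Tt [Pp L]]]]]]]].
  have K := @key _ _ _ _ _ _ _ _ _ _ Tt Pp L.
  exists (fc_bang F M), (uunit M); split; [exact: K | exact: one_eq].
split.
  move=> E F M [T [P [p1 [p2 [s [z [Tt [Pp L]]]]]]]].
  have K := @key _ _ _ _ _ _ _ _ _ _ Tt Pp L.
  exists (fc_bang F M), (uunit M); split; [exact: K | exact: one_eq].
split.
  move=> X s z sc h2 h1 h3; exact: (@pi1_gen X s z sc h1 h2 h3).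
split.
  move=> X s z sc h1 h2 h3; apply: (@pi1_gen X (fun a b => s b a) z) => //.
  move=> q.
  have := continuous_cvg _ (sc (q.2, q.1))
    (cvg_pair (@cvg_snd _ _ (nbhs q.1) (nbhs q.2) _) (@cvg_fst _ _ (nbhs q.1) (nbhs q.2) _)).
  exact.
move=> X p pc h1 h2 h3 x0.
apply: (@pi1_gen X (fun a b => p a b x0) x0) => //.
move=> q.
have := continuous_cvg _ (pc ((q.1, q.2), x0))
  (cvg_pair (cvg_pair (@cvg_fst _ _ (nbhs q.1) (nbhs q.2) _) (@cvg_snd _ _ (nbhs q.1) (nbhs q.2) _))
     (cvg_cst x0)).
exact.
Qed.
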